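(* Let $y\in\mathbb R^n$ have distinct values $\lambda_1<\cdots<\lambda_s$ with multiplicities $m_1,\ldots,m_s$, and let $0\le\gamma<1$. With $x_n:=1-\gamma-x_1-\cdots-x_{n-1}$, $$\int_0^{1-\gamma}\int_0^{1-\gamma-x_1}\cdots\int_0^{1-\gamma-x_1-\cdots-x_{n-2}}e^{\langle y,x\rangle}\,dx_{n-1}\cdots dx_1=\frac{\det M(y,1-\gamma)}{\prod_{i<j}(\lambda_j-\lambda_i)^{m_im_j}}.$$ Moreover only the final row of $M(y,1-\gamma)$ depends on $\gamma$.
   Context: For $z\in\mathbb R^n$ with distinct values $\kappa_1<\cdots<\kappa_s$ of multiplicities $m_1,\ldots,m_s$ and $c\in\mathbb R$, $M(z,c)$ is the $n\times n$ matrix with columns indexed by pairs $(i,j)$, $1\le i\le s$, $0\le j\le m_i-1$ (lexicographic order), rows $r=0,\ldots,n-2$ plus a final row; the entry in row $r$, column $(i,j)$ is $\binom rj\kappa_i^{r-j}$ ($0$ if $j>r$), and the final-row entry in column $(i,j)$ is $c^je^{c\kappa_i}/j!$. *)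

(* Defs.v *)
From HB Require Import structures.
From mathcomp Require Import all_boot all_order all_algebra.
From mathcomp Require Import all_classical all_reals all_analysis.
Set Implicit Arguments. Unset Strict Implicit. Unset Printing Implicit Defensive.
Import Order.TTheory GRing.Theory Num.Theory.
Import numFieldNormedType.Exports.
Local Open Scope classical_set_scope.
Local Open Scope ring_scope.

Section Defs.
Variable R : realType.

(* the distinct values kappa_1 < ... < kappa_s of z (0-indexed list) *)
Definition distinct_vals n (z : 'I_n -> R) : seq R :=
  sort <=%R (undup [seq z i | i <- enum 'I_n]).

Definition nvals n (z : 'I_n -> R) : nat := size (distinct_vals z).

(* kappa_(i+1) (0-indexed) *)
Definition kap n (z : 'I_n -> R) (i : nat) : R := nth 0 (distinct_vals z) i.

Definition mult n (z : 'I_n -> R) (i : nat) : nat :=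
  count (fun k => z k == kap z i) (enum 'I_n).

(* column labels (i,j), 0 <= i < s, 0 <= j < m_i, in lexicographic order *)
Definition col_labels n (z : 'I_n -> R) : seq (nat * nat) :=
  flatten [seq [seq (i, j) | j <- iota 0 (mult z i)] | i <- iota 0 (nvals z)].

Definition Mmat n (z : 'I_n -> R) (c : R) : 'M[R]_n :=
  \matrix_(r < n, col < n)
    let ij := nth (0%N, 0%N) (col_labels z) col in
    let i := ij.1 in let j := ij.2 in
    if (r < n.-1)%N then
      (if (j <= r)%N then ('C(r, j))%:R * kap z i ^+ (r - j) else 0)
    else c ^+ j * expR (c * kap z i) / (j`!)%:R.

(* iterated integral over the simplex:
   simplex_int k t F = int_0^t int_0^(t-u1) ... int_0^(t-u1-..-u_(k-1))
                         F [:: u1; ...; uk; t - u1 - ... - uk] du_k ... du_1 *)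
Fixpoint simplex_int (k : nat) (t : R) (F : seq R -> R) : R :=
  match k with
  | 0 => F [:: t]
  | k'.+1 => \int[@lebesgue_measure R]_(u in `[0, t]%classic)
               simplex_int k' (t - u) (fun xs => F (u :: xs))
  end.

End Defs.

(* Main.v *)
Require Import Defs.
From HB Require Import structures.
From mathcomp Require Import all_boot all_order all_algebra.
From mathcomp Require Import all_classical all_reals all_analysis.
Import Order.TTheory GRing.Theory Num.Theory.
Import numFieldNormedType.Exports.
Local Open Scope ring_scope.
From mathcomp Require Import ring lra.

Set Implicit Arguments. Unset Strict Implicit.

Section A.
Variable R : realType.

Lemma isdM (f g : R -> R) (df dg x : R) : is_derive x 1 f df -> is_derive x 1 g dg ->
  is_derive x 1 (fun u => f u * g u) (f x * dg + g x * df).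
Proof. move=> hf hg; have := is_deriveM hf hg. by []. Qed.

Lemma isdD (f g : R -> R) (df dg x : R) : is_derive x 1 f df -> is_derive x 1 g dg ->
  is_derive x 1 (fun u => f u + g u) (df + dg).
Proof. move=> hf hg; exact: (is_deriveD hf hg). Qed.

Lemma isdC (k x : R) : is_derive x 1 (fun _ : R => k) 0.
Proof. exact: is_derive_cst. Qed.

Lemma isdCM (k : R) (f : R -> R) (df x : R) : is_derive x 1 f df ->
  is_derive x 1 (fun u => k * f u) (k * df).
Proof.
move=> hf; have := isdM (isdC k x) hf. by rewrite mulr0 addr0.
Qed.

Lemma isdMC (k : R) (f : R -> R) (df x : R) : is_derive x 1 f df ->
  is_derive x 1 (fun u => f u * k) (df * k).
Proof.
move=> hf; have := isdM hf (isdC k x). by rewrite mulr0 add0r mulrC.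
Qed.

Lemma isd_lin (k b x : R) : is_derive x 1 (fun u => k * u + b) k.
Proof.
have h : is_derive x (1:R) (fun u : R => u) 1 by exact: is_derive_id.
have := isdD (isdCM k h) (isdC b x). by rewrite mulr1 addr0.
Qed.

Lemma isd_exp (k b x : R) : is_derive x 1 (fun u => expR (k * u + b)) (k * expR (k * x + b)).
Proof.
have := @is_derive1_comp R expR (fun u => k * u + b) x _ _ (is_derive_expR _) (isd_lin k b x).
by rewrite mulrC.
Qed.

Lemma isd_pow (f : R -> R) (df : R) n (x : R) : is_derive x 1 f df ->
  is_derive x 1 (fun u => f u ^+ n) (n%:R * f x ^+ n.-1 * df).
Proof.
move=> hf; have := is_deriveX n hf.
have -> : (f ^+ n) = (fun u => f u ^+ n) by apply/funext => u; rewrite exprfctE.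
by [].
Qed.

Lemma isd_eq (f : R -> R) (df df' x : R) : is_derive x 1 f df -> df = df' -> is_derive x 1 f df'.
Proof. by move=> h <-. Qed.

Lemma isd_fe (f g : R -> R) (df x : R) : is_derive x 1 f df -> f = g -> is_derive x 1 g df.
Proof. by move=> h <-. Qed.

Lemma isd_id (x : R) : is_derive x 1 (fun u : R => u) 1.
Proof. exact: is_derive_id. Qed.

Lemma isd_expf (g : R -> R) (dg x : R) : is_derive x 1 g dg ->
  is_derive x 1 (fun u => expR (g u)) (expR (g x) * dg).
Proof.
move=> hg; exact: (@is_derive1_comp R expR g x _ _ (is_derive_expR _) hg).
Qed.

Lemma isd_sub (t x : R) : is_derive x 1 (fun u => t - u) (-1).
Proof.
have h := isdD (isdC t x) (isdCM (-1) (isd_id x)).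
apply: (isd_fe (isd_eq h _)); first by rewrite add0r mulr1.
by apply/funext => u; rewrite mulN1r.
Qed.

Definition ebas (k : R) (j : nat) (t : R) : R := t ^+ j * expR (t * k) / (j`!)%:R.
Definition E (s : seq (R * R * nat)) (t : R) : R := \sum_(x <- s) x.1.1 * ebas x.1.2 x.2 t.

Fixpoint Pp (d t : R) (j : nat) (u : R) : R :=
  match j with
  | 0 => d^-1
  | j'.+1 => d^-1 * ((t - u) ^+ j / (j`!)%:R + Pp d t j' u)
  end.

Lemma dPp (d t : R) j (u : R) : d != 0 ->
  is_derive u 1 (fun v => expR (d * v) * Pp d t j v) (expR (d * u) * ((t - u) ^+ j / (j`!)%:R)).
Proof.
move=> d0; elim: j => [|j IH].
  apply: isd_eq; first exact: (isdMC (d^-1) (isd_expf (isdCM d (isd_id u)))).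
  by rewrite /= expr0 fact0 divr1 mulr1 -mulrA mulfV ?mulr1.
apply: (@isd_fe (fun v => d^-1 * (expR (d * v) * ((t - v) ^+ j.+1 / (j.+1`!)%:R) + expR (d * v) * Pp d t j v))); last first.
  apply/funext => v /=. ring.
apply: isd_eq.
  apply: isdCM; apply: (isdD _ IH).
  apply: (isdM (isd_expf (isdCM d (isd_id u)))).
  apply: isdMC; exact: (isd_pow j.+1 (isd_sub t u)).
rewrite factS natrM /=.
have hj : (j`!)%:R != 0 :> R by rewrite pnatr_eq0 -lt0n fact_gt0.
have hj1 : (j.+1)%:R != 0 :> R by rewrite pnatr_eq0.
field.
by rewrite d0 hj /= -(natrD R 1 j) pnatr_eq0.
Qed.

Definition Anti (a k : R) (j : nat) (t u : R) : R :=
  if a == k then - ((t - u) ^+ j.+1 * expR (t * k) / (j.+1`!)%:R)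
  else expR (t * k) * (expR ((a - k) * u) * Pp (a - k) t j u).

Lemma isdN (f : R -> R) (df x : R) : is_derive x 1 f df -> is_derive x 1 (fun u => - f u) (- df).
Proof.
move=> h; apply: (isd_fe (isd_eq (isdCM (-1) h) _)); first by rewrite mulN1r.
by apply/funext => u; rewrite mulN1r.
Qed.

Lemma dAnti (a k : R) j (t u : R) :
  is_derive u 1 (Anti a k j t) (expR (a * u) * ebas k j (t - u)).
Proof.
rewrite /Anti /ebas; case: eqP => [<-|/eqP ak].
  apply: isd_eq.
    apply: isdN; apply: isdMC; apply: isdMC; exact: (isd_pow j.+1 (isd_sub t u)).
  have -> : expR (a * u) * ((t - u) ^+ j * expR ((t - u) * a) / (j`!)%:R) =
            (t - u) ^+ j * expR (t * a) / (j`!)%:R.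
    have ee : expR (a * u) * expR ((t - u) * a) = expR (t * a).
      by rewrite -!expRD; congr expR; ring.
    rewrite !mulrA [expR (a * u) * _]mulrC -[_ * expR ((t - u) * a)]mulrA ee; ring.
  rewrite factS natrM /=.
  have hj : (j`!)%:R != 0 :> R by rewrite pnatr_eq0 -lt0n fact_gt0.
  field.
  by rewrite hj /= -(natrD R 1 j) pnatr_eq0.
have d0 : a - k != 0 by rewrite subr_eq0.
have h := isdCM (expR (t * k)) (dPp t j u d0).
apply: (isd_fe (isd_eq h _)); last by [].
have ee : expR (t * k) * expR ((a - k) * u) = expR (a * u) * expR ((t - u) * k).
  by rewrite -!expRD; congr expR; ring.
rewrite mulrA ee; ring.
Qed.

Lemma isd_ebas (k : R) j (t u : R) : is_derive u 1 (fun v => ebas k j (t - v))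
   ((j%:R * (t - u) ^+ j.-1 * (-1)) * expR ((t - u) * k) / (j`!)%:R +
    (t - u) ^+ j * (expR ((t - u) * k) * (-1 * k)) / (j`!)%:R).
Proof.
have h := isdMC ((j`!)%:R^-1) (isdM (isd_pow j (isd_sub t u)) (isd_expf (isdMC k (isd_sub t u)))).
apply: (isd_fe (isd_eq h _)); first by ring.
reflexivity.
Qed.

Lemma dE (s : seq (R * R * nat)) (t u : R) : exists df, is_derive u 1 (fun v => E s (t - v)) df.
Proof.
elim: s => [|x s [df IH]].
  exists 0; apply: (isd_fe (isdC 0 u)); apply/funext => v; by rewrite /E big_nil.
have h := isdD (isdCM x.1.1 (isd_ebas x.1.2 x.2 t u)) IH.
eexists; apply: (isd_fe h).
by apply/funext => v; rewrite /E big_cons.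
Qed.

Fixpoint Qne (a k c : R) (j : nat) : seq (R * R * nat) :=
  match j with
  | 0 => [:: (c / (a - k), a, 0%N); (- (c / (a - k)), k, 0%N)]
  | j'.+1 => rcons (Qne a k (c / (a - k)) j') (- (c / (a - k)), k, j)
  end.

Definition conv (a : R) (x : R * R * nat) : seq (R * R * nat) :=
  if a == x.1.2 then [:: (x.1.1, x.1.2, x.2.+1)] else Qne a x.1.2 x.1.1 x.2.

Definition convs (a : R) (s : seq (R * R * nat)) := flatten (map (conv a) s).

Lemma E_rcons s x t : E (rcons s x) t = E s t + x.1.1 * ebas x.1.2 x.2 t.
Proof. by rewrite /E -cats1 big_cat big_seq1. Qed.

Lemma E_Qne (a k : R) j (t : R) : a != k -> forall c,
  c * (expR (t * k) * (expR ((a - k) * t) * Pp (a - k) t j t -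
                       expR ((a - k) * 0) * Pp (a - k) t j 0)) = E (Qne a k c j) t.
Proof.
move=> ak; have d0 : a - k != 0 by rewrite subr_eq0.
have ee : expR (t * k) * expR ((a - k) * t) = expR (t * a).
  by rewrite -expRD; congr expR; ring.
elim: j => [|j IH] c.
  rewrite /E /= big_cons big_seq1 /= /ebas /= !expr0 fact0 !mul1r !divr1 mulr0 expR0 mul1r.
  rewrite -ee; ring.
change (Qne a k c j.+1) with (rcons (Qne a k (c/(a-k)) j) (-(c/(a-k)), k, j.+1)).
rewrite E_rcons -IH /= /ebas subrr expr0n /= mul0r add0r mulr0 expR0 !mul1r.
rewrite subr0; ring.
Qed.

Lemma Anti_val (a k : R) j (t c : R) :
  c * (Anti a k j t t - Anti a k j t 0) = E (conv a (c, k, j)) t.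
Proof.
rewrite /Anti /conv /=; case: eqP => [<-|/eqP ak].
  by rewrite /E big_seq1 /ebas /= subrr expr0n /= subr0 !mul0r oppr0 sub0r opprK.
rewrite -E_Qne //; congr (_ * _); by rewrite mulrBr.
Qed.

Notation mu := (@lebesgue_measure R).

Lemma FTC_all (f F : R -> R) a b : a <= b ->
  (forall x : R, is_derive x (1:R) F (f x)) -> (forall x : R, derivable f x 1) ->
  \int[mu]_(x in `[a, b]) f x = F b - F a.
Proof.
move=> ab dF df.
have cF : continuous F.
  by move=> x; apply/differentiable_continuous/derivable1_diffP; case: (dF x).
have cf : continuous f.
  by move=> x; apply/differentiable_continuous/derivable1_diffP.
move: ab; rewrite le_eqVlt => /predU1P[<-|ab].
  by rewrite set_itv1 Rintegral_set1 subrr.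
rewrite /Rintegral (@continuous_FTC2 R f F a b ab).
- by [].
- by apply: continuous_subspaceT.
- split.
  + by move=> x _; case: (dF x).
  + exact: cvg_at_right_filter (cF a).
  + exact: cvg_at_left_filter (cF b).
- move=> x _; rewrite derive1E; by case: (dF x).
Qed.

Lemma dsumA (a t : R) (s : seq (R * R * nat)) (u : R) :
  is_derive u 1 (fun v => \sum_(x <- s) x.1.1 * Anti a x.1.2 x.2 t v)
    (\sum_(x <- s) x.1.1 * (expR (a * u) * ebas x.1.2 x.2 (t - u))).
Proof.
elim: s => [|x s IH].
  rewrite big_nil; apply: (isd_fe (isdC 0 u)); apply/funext => v; by rewrite big_nil.
have h := isdD (isdCM x.1.1 (dAnti a x.1.2 x.2 t u)) IH.
rewrite big_cons; apply: (isd_fe h).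
by apply/funext => v; rewrite big_cons.
Qed.

Lemma E_convs (a t : R) s : E (convs a s) t = \sum_(x <- s) E (conv a x) t.
Proof.
elim: s => [|x s IH]; first by rewrite /E /convs /= !big_nil.
by rewrite /convs /= /E big_cat big_cons -IH.
Qed.

Lemma int_conv (a c t : R) s : 0 <= t ->
  \int[mu]_(u in `[0, t]) (expR (c + a * u) * E s (t - u)) = expR c * E (convs a s) t.
Proof.
move=> t0.
set F := fun u => expR c * \sum_(x <- s) x.1.1 * Anti a x.1.2 x.2 t u.
have H1 : forall x : R, is_derive x (1:R) F (expR (c + a * x) * E s (t - x)).
  move=> x; apply: isd_eq; first exact: (isdCM _ (dsumA a t s x)).
  rewrite expRD /E -mulrA; congr (_ * _).
  by rewrite big_distrr; apply: eq_bigr => y _ /=; ring.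
have H2 : forall x : R, derivable (fun u => expR (c + a * u) * E s (t - u)) x 1.
  move=> x; have [df hdf] := dE s t x.
  have h := isdM (isd_expf (isdD (isdC c x) (isdCM a (isd_id x)))) hdf.
  by case: h.
rewrite (@FTC_all _ F _ _ t0 H1 H2) /F.
rewrite -mulrBr -sumrB E_convs; congr (_ * _); apply: eq_bigr => -[[c' k] j] _ /=.
by rewrite -mulrBr Anti_val.
Qed.

Definition G (ys : seq R) (c : R) (xs : seq R) : R :=
  expR (c + \sum_(i < size ys) ys`_i * xs`_i).

Fixpoint Trip (ys : seq R) : seq (R * R * nat) :=
  match ys with
  | [::] => [::]
  | y :: ys' => if ys' is [::] then [:: (1, y, 0%N)] else convs y (Trip ys')
  end.

Lemma simplex_G k : forall (ys : seq R) (c t : R), size ys = k.+1 -> 0 <= t ->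
  simplex_int k t (G ys c) = expR c * E (Trip ys) t.
Proof.
elim: k => [|k IH]; move=> ys c t.
  case: ys => [|y [|//]] //= _ t0.
  rewrite /G /= big_ord_recl big_ord0 /E big_seq1 /ebas /= expr0 fact0 divr1 !mul1r.
  by rewrite addr0 expRD [y * t]mulrC.
case: ys => [|y ys'] //= [sz] t0.
case: ys' sz => [//|y' ys''] sz.
set ys' := y' :: ys''.
have -> : (fun u => simplex_int k (t - u) (fun xs => G (y :: ys') c (u :: xs))) =
          (fun u => simplex_int k (t - u) (G ys' (c + y * u))).
  apply/funext => u; congr simplex_int; apply/funext => xs.
  by rewrite /G /= big_ord_recl /= addrA; congr (expR (_ + _)); apply: eq_bigr => i _; rewrite add0n.
transitivity (\int[mu]_(u in `[0,t]) (expR (c + y * u) * E (Trip ys') (t - u)));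
  last by rewrite int_conv.
apply: eq_Rintegral => u; rewrite inE /= in_itv /= => /andP[u0 ut].
by rewrite IH // subr_ge0.
Qed.

Definition mom (k : nat) (q : R) (j : nat) : R := ('C(k, j))%:R * q ^+ (k - j).
Definition Ms (k : nat) (s : seq (R * R * nat)) : R := \sum_(x <- s) x.1.1 * mom k x.1.2 x.2.

Lemma momS k q j : mom k.+1 q j.+1 = q * mom k q j.+1 + mom k q j.
Proof.
rewrite /mom binS natrD subSS mulrDl; congr (_ + _).
case: (ltnP j k) => jk.
  by rewrite -(subnSK jk) exprS; ring.
by rewrite bin_small ?ltnS // !mul0r mulr0.
Qed.

Lemma momS0 k q : mom k.+1 q 0 = q * mom k q 0.
Proof. by rewrite /mom !bin0 !subn0 exprS; ring. Qed.

Lemma mom0S q j : mom 0 q j.+1 = 0.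
Proof. by rewrite /mom bin0n /= mul0r. Qed.

Lemma mom00 q : mom 0 q 0 = 1.
Proof. by rewrite /mom bin0 expr0 mulr1. Qed.

Lemma Ms_cons k x s : Ms k (x :: s) = x.1.1 * mom k x.1.2 x.2 + Ms k s.
Proof. by rewrite /Ms big_cons. Qed.

Lemma Ms_rcons k x s : Ms k (rcons s x) = Ms k s + x.1.1 * mom k x.1.2 x.2.
Proof. by rewrite /Ms -cats1 big_cat big_seq1. Qed.

Lemma Ms_Qne (a q : R) j : a != q -> forall c, Ms 0 (Qne a q c j) = 0 /\
  forall k, Ms k.+1 (Qne a q c j) = a * Ms k (Qne a q c j) + c * mom k q j.
Proof.
move=> aq; have d0 : a - q != 0 by rewrite subr_eq0.
elim: j => [|j IH] c.
  rewrite /= /Ms !big_cons !big_nil /= !mom00 !addr0; split; first by ring.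
  move=> k; rewrite !big_cons !big_nil /= !momS0 !addr0.
  have -> : q * mom k q 0 = (a - (a - q)) * mom k q 0 by congr (_ * _); ring.
  field; exact: d0.
change (Qne a q c j.+1) with (rcons (Qne a q (c/(a-q)) j) (-(c/(a-q)), q, j.+1)).
have [IH0 IHS] := IH (c / (a - q)).
split; first by rewrite Ms_rcons IH0 /= mom0S; ring.
move=> k; rewrite !Ms_rcons IHS /= momS.
have -> : q * mom k q j.+1 = (a - (a - q)) * mom k q j.+1 by congr (_ * _); ring.
field; exact: d0.
Qed.

Lemma Ms_conv a x : Ms 0 (conv a x) = 0 /\
  forall k, Ms k.+1 (conv a x) = a * Ms k (conv a x) + x.1.1 * mom k x.1.2 x.2.
Proof.
rewrite /conv; case: eqP => [<-|/eqP ax].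
  rewrite /Ms !big_seq1 /= mom0S mulr0; split => // k.
  rewrite !big_seq1 /= momS; ring.
exact: Ms_Qne.
Qed.

Lemma Ms_convs a s : Ms 0 (convs a s) = 0 /\
  forall k, Ms k.+1 (convs a s) = a * Ms k (convs a s) + Ms k s.
Proof.
elim: s => [|x s [IH0 IHS]].
  by rewrite /convs /Ms /= !big_nil; split => // k; rewrite !big_nil mulr0 addr0.
have [C0 CS] := Ms_conv a x.
have cat_eq : forall k, Ms k (convs a (x :: s)) = Ms k (conv a x) + Ms k (convs a s).
  by move=> k; rewrite /convs /= /Ms big_cat.
split; first by rewrite cat_eq C0 IH0 addr0.
by move=> k; rewrite !cat_eq CS IHS Ms_cons; ring.
Qed.

Lemma Ms_Trip (ys : seq R) : ys != [::] ->
  forall k, (k < size ys)%N -> Ms k (Trip ys) = (k == (size ys).-1)%:R.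
Proof.
elim: ys => [//|y ys' IH] _.
case: ys' IH => [|y' ys''] IH.
  by move=> [|k] //= _; rewrite /Ms big_seq1 /= mom00 mulr1.
set ys' := y' :: ys''.
have IH' := IH isT.
change (Trip (y :: ys')) with (convs y (Trip ys')).
have [C0 CS] := Ms_convs y (Trip ys').
rewrite [size (y :: ys')]/= /=.
elim=> [|k IHk] hk; first by rewrite C0.
rewrite CS IHk 1?ltnW // IH' //=.
have -> : (k == (size ys'').+1) = false by apply/negbTE; rewrite neq_ltn; rewrite -ltnS hk.
by rewrite mulr0 add0r.

Qed.

Lemma Qne_mem (a q : R) j : forall c x, x \in Qne a q c j ->
  (x.1.2 = a /\ x.2 = 0%N) \/ (x.1.2 = q /\ (x.2 <= j)%N).
Proof.
elim: j => [|j IH] c x.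
  by rewrite !inE => /orP[] /eqP -> /=; [left|right].
change (Qne a q c j.+1) with (rcons (Qne a q (c/(a-q)) j) (-(c/(a-q)), q, j.+1)).
rewrite mem_rcons inE => /orP[/eqP -> /=|/IH]; first by right.
case=> [h|[h1 h2]]; first by left.
by right; split => //; rewrite (leq_trans h2).
Qed.

Lemma Trip_inv (ys : seq R) : forall x, x \in Trip ys -> (x.2 < count (pred1 x.1.2) ys)%N.
Proof.
elim: ys => [//|y ys' IH] x.
case: ys' IH => [|y' ys''] IH.
  by rewrite inE => /eqP -> /=; rewrite eqxx.
set ys' := y' :: ys''.
change (Trip (y :: ys')) with (convs y (Trip ys')).
move=> /flatten_mapP [x0 x0in xin].
have := IH x0 x0in.
rewrite [count _ (y :: _)]/=.
move: xin; rewrite /conv; case: eqP => [yx|/eqP yx].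
  by rewrite inE => /eqP -> /=; rewrite -yx eqxx.
move=> /Qne_mem [[-> ->]|[-> h]] /=; first by rewrite eqxx.
move=> h2; rewrite (negbTE yx) add0n; exact: leq_ltn_trans h h2.
Qed.

End A.


Section P.
Variable R : realType.

Lemma nderivn_mulXsubC (p : {poly R}) c n :
  (p * ('X - c%:P))^`N(n.+1) = p^`N(n) + p^`N(n.+1) * ('X - c%:P).
Proof.
have -> : p * ('X - c%:P) = (p * 'X + 0%:P) - c *: p.
  by rewrite polyC0 addr0 mulrBr -mul_polyC [c%:P * p]mulrC.
rewrite linearB /= nderivnMXaddC nderivnZ mulrBr -addrA; congr (_ + _).
by rewrite -mul_polyC [c%:P * _]mulrC.
Qed.

Lemma key1 (p : {poly R}) c n :
  ((p * ('X - c%:P))^`N(n.+1)).[c] = (p^`N(n)).[c].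
Proof. by rewrite nderivn_mulXsubC hornerD hornerM hornerXsubC subrr mulr0 addr0. Qed.

Lemma key0 (p : {poly R}) c : ((p * ('X - c%:P))^`N(0)).[c] = 0.
Proof. by rewrite nderivn0 hornerM hornerXsubC subrr mulr0. Qed.

Lemma keym (p : {poly R}) c m : forall j,
  ((p * ('X - c%:P) ^+ m)^`N(j)).[c] = if (j < m)%N then 0 else (p^`N(j - m)).[c].
Proof.
elim: m => [|m IH] j; first by rewrite expr0 mulr1 subn0.
rewrite exprSr mulrA.
case: j => [|j]; first by rewrite key0.
by rewrite key1 IH ltnS subSS.
Qed.

End P.


Lemma sum_count_uniq (T : eqType) (dv ys : seq T) : uniq dv -> {subset ys <= dv} ->
  (\sum_(k <- dv) count (pred1 k) ys)%N = size ys.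
Proof.
move=> udv; elim: ys => [|x ys IH] sub.
  by rewrite big1 // => k _.
rewrite /= big_split /= IH; last by move=> u uin; apply: sub; rewrite inE uin orbT.
suff -> : (\sum_(k <- dv) (pred1 k x : nat))%N = 1%N by rewrite add1n.
have h1 : x \in dv by apply: sub; rewrite inE eqxx.
rewrite -[1%N](_ : count_mem x dv = 1%N); last by rewrite count_uniq_mem // h1.
rewrite -sum1_count [in RHS]big_mkcond /=; apply: eq_bigr => k _.
by rewrite [x == k]eq_sym; case: (k == x).
Qed.

Section C.
Variable R : realType.
Variable n : nat.
Variable y : 'I_n -> R.

Local Notation ys := [seq y i | i <- enum 'I_n].
Local Notation dv := (distinct_vals y).
Local Notation s := (nvals y).
Local Notation m := (mult y).
Local Notation lab := (col_labels y).

Lemma dv_uniq : uniq dv.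
Proof. by rewrite /distinct_vals sort_uniq undup_uniq. Qed.

Lemma dv_mem x : (x \in dv) = (x \in ys).
Proof. by rewrite /distinct_vals mem_sort mem_undup. Qed.

Lemma mult_count i : m i = count (pred1 (kap y i)) ys.
Proof. by rewrite /mult [RHS]count_map. Qed.

Lemma sum_mult : (\sum_(i < s) m i)%N = n.
Proof.
rewrite (eq_bigr (fun i : 'I_s => count (pred1 (nth 0 dv i)) ys)); last first.
  by move=> i _; rewrite mult_count.
rewrite -(big_mkord xpredT (fun i => count (pred1 (nth 0 dv i)) ys)).
rewrite -(big_nth 0 xpredT (fun k => count (pred1 k) ys)).
rewrite sum_count_uniq; first by rewrite size_map size_enum_ord.
  exact: dv_uniq.
by move=> u; rewrite dv_mem.
Qed.

Lemma lab_size : size lab = n.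
Proof.
rewrite /col_labels size_allpairs_dep; transitivity (\sum_(i < s) m i)%N; last exact: sum_mult.
rewrite -(big_mkord xpredT m).
rewrite sumnE big_map /index_iota subn0; apply: eq_bigr => i _; by rewrite size_iota.
Qed.

Lemma lab_mem i j : ((i, j) \in lab) = (i < s)%N && (j < m i)%N.
Proof.
apply/allpairsPdep/andP.
  by move=> [i' [j' [hi hj [-> ->]]]]; move: hi hj; rewrite !mem_iota /=.
by move=> [hi hj]; exists i, j; rewrite !mem_iota /=.
Qed.

Lemma lab_uniq : uniq lab.
Proof.
apply: allpairs_uniq_dep; first exact: iota_uniq.
  by move=> i _; exact: iota_uniq.
by move=> [i1 j1] [i2 j2] _ _ /= [-> ->].
Qed.

Definition off (i : nat) : nat := (\sum_(i' < i) m i')%N.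

Lemma lab_nth i j : (i < s)%N -> (j < m i)%N ->
  nth (0%N, 0%N) lab (off i + j) = (i, j) /\ (off i + j < n)%N.
Proof.
move=> hi hj.
have sp : s = (i + (s - i.+1).+1)%N by rewrite subnSK // subnKC // ltnW.
have hiota : iota 0 s = iota 0 i ++ i :: iota i.+1 (s - i.+1).
  by rewrite {1}sp iotaD add0n.
rewrite /col_labels hiota map_cat flatten_cat /=.
set pre := flatten _.
have spre : size pre = off i.
  rewrite /pre size_allpairs_dep /off sumnE big_map -(big_mkord xpredT m).
  by rewrite /index_iota subn0; apply: eq_bigr => k _; rewrite size_iota.
rewrite nth_cat spre ltnNge leq_addr /= addKn nth_cat size_map size_iota hj.
rewrite (nth_map 0%N) ?size_iota // nth_iota //; split => //.
rewrite -lab_size /col_labels hiota map_cat flatten_cat /=.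
rewrite -/pre !size_cat spre size_map size_iota ltn_add2l.
exact: leq_trans hj (leq_addr _ _).
Qed.

Lemma lab_inv (col : nat) : (col < n)%N ->
  let ij := nth (0%N, 0%N) lab col in
  [/\ (ij.1 < s)%N, (ij.2 < m ij.1)%N & col = (off ij.1 + ij.2)%N].
Proof.
move=> hc /=.
have hin : nth (0%N, 0%N) lab col \in lab by rewrite mem_nth // lab_size.
case E : (nth (0%N, 0%N) lab col) hin => [i j]; rewrite lab_mem => /andP[hi hj] /=.
split => //.
have [h1 h2] := lab_nth hi hj.
apply/eqP; rewrite -(@nth_uniq _ (0%N, 0%N) lab) ?lab_size // ?h1 ?E //; exact: lab_uniq.
Qed.

Definition zz (l : nat) : R := kap y (nth (0%N, 0%N) lab l).1.

Lemma zz_block i j : (i < s)%N -> (j < m i)%N -> zz (off i + j) = kap y i.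
Proof. by move=> hi hj; rewrite /zz (lab_nth hi hj).1. Qed.

Lemma off_prod (G : R -> R) i : (i <= s)%N ->
  \prod_(0 <= l < off i) G (zz l) = \prod_(i' < i) G (kap y i') ^+ m i'.
Proof.
elim: i => [|i IH] hi.
  have -> : off 0 = 0%N by rewrite /off big_ord0.
  by rewrite big_ord0 big_mkord big_ord0.
rewrite big_ord_recr -IH; last exact: ltnW.
have -> : off i.+1 = (off i + m i)%N by rewrite /off big_ord_recr.
rewrite (@big_cat_nat _ _ _ (off i)) ?leq_addr //=; congr (_ * _).
rewrite -{1}(add0n (off i)) big_addn addKn.
rewrite (@eq_big_nat _ _ _ 0 (m i) _ (fun _ => G (kap y i))).
  by rewrite prodr_const_nat subn0.
by move=> l /andP[_ hl]; rewrite addnC zz_block.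
Qed.

End C.


Section D.
Variable R : realType.
Variable n : nat.
Variable y : 'I_n -> R.

Local Notation s := (nvals y).
Local Notation m := (mult y).
Local Notation lab := (col_labels y).
Local Notation li col := (nth (0%N, 0%N) lab col).1.
Local Notation lj col := (nth (0%N, 0%N) lab col).2.

Definition W : 'M[R]_n := \matrix_(r, col) mom r (kap y (li col)) (lj col).
Definition NN (r : nat) : {poly R} := \prod_(0 <= l < r) ('X - (zz y l)%:P).
Definition hd (p : {poly R}) (col : 'I_n) : R := (p^`N(lj col)).[kap y (li col)].
Definition Am : 'M[R]_n := \matrix_(r, col) hd (NN r) col.
Definition Lm : 'M[R]_n := \matrix_(r, k) (NN r)`_k.

Lemma size_NN r : size (NN r) = r.+1.
Proof. by rewrite /NN size_prod_XsubC size_iota subn0. Qed.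

Lemma hd_expand (p : {poly R}) (col : 'I_n) : (size p <= n)%N ->
  hd p col = \sum_(k < n) p`_k * mom k (kap y (li col)) (lj col).
Proof.
move=> sp.
have Hp : p = \sum_(k < n) p`_k *: 'X^k.
  rewrite -poly_def; apply/polyP => k; rewrite coef_poly; case: ltnP => // hk.
  by rewrite nth_default // (leq_trans sp hk).
rewrite /hd {1}Hp linear_sum horner_sum; apply: eq_bigr => k _.
by rewrite linearZ /= nderivnXn hornerZ hornerMn hornerXn /mom mulr_natl.
Qed.

Lemma Am_LW : Am = Lm *m W.
Proof.
apply/matrixP => r col; rewrite !mxE hd_expand; last by rewrite size_NN.
by apply: eq_bigr => k _; rewrite !mxE.
Qed.

Lemma det_Lm : \det Lm = 1.
Proof.
rewrite det_trig; last first.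
  apply/is_trig_mxP => i j hij; rewrite mxE nth_default // size_NN //.
rewrite big1 // => i _; rewrite mxE.
have := lead_coef_prod_XsubC (index_iota 0 i) xpredT (zz y).
by rewrite /lead_coef -/(NN i) size_NN.
Qed.

Lemma NN_split a r : (a <= r)%N ->
  NN r = NN a * \prod_(a <= l < r) ('X - (zz y l)%:P).
Proof. by move=> ar; rewrite /NN (@big_cat_nat _ _ _ a). Qed.

Lemma NN_block i j : (i < s)%N -> (j <= m i)%N ->
  NN (off y i + j) = NN (off y i) * ('X - (kap y i)%:P) ^+ j.
Proof.
move=> hi hj; rewrite (NN_split (leq_addr j _)); congr (_ * _).
rewrite -{1}(add0n (off y i)) big_addn addKn.
rewrite (@eq_big_nat _ _ _ 0 j _ (fun _ => 'X - (kap y i)%:P)).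
  by rewrite prodr_const_nat subn0.
move=> l /andP[_ hl]; rewrite addnC zz_block //; exact: leq_trans hl hj.
Qed.

Lemma Am_upper (r col : 'I_n) : (col < r)%N -> Am r col = 0.
Proof.
move=> cr; rewrite mxE /hd.
have [hi hj ec] := lab_inv y (ltn_ord col).
set i := li col in hi hj ec *; set j := lj col in hj ec *.
have hr : (off y i + j.+1 <= r)%N by rewrite addnS -ec.
rewrite (NN_split hr) (NN_block hi hj) mulrAC keym ltnSn.
by [].
Qed.

Lemma Am_diag (p : 'I_n) : Am p p = (NN (off y (li p))).[kap y (li p)].
Proof.
rewrite mxE /hd.
have [hi hj ec] := lab_inv y (ltn_ord p).
set i := li p in hi hj ec *; set j := lj p in hj ec *.
have -> : NN p = NN (off y i) * ('X - (kap y i)%:P) ^+ j.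
  by rewrite -(NN_block hi (ltnW hj)); congr NN.
by rewrite keym ltnn subnn nderivn0.
Qed.

Lemma det_W_prod : \det W = \prod_(i < s) (\prod_(i' < i) (kap y i - kap y i') ^+ m i') ^+ m i.
Proof.
have -> : \det W = \det Am by rewrite Am_LW det_mulmx det_Lm mul1r.
rewrite -det_tr det_trig; last first.
  by apply/is_trig_mxP => i j hij; rewrite mxE Am_upper.
rewrite (eq_bigr (fun p : 'I_n => (fun ij : nat * nat => (NN (off y ij.1)).[kap y ij.1]) (nth (0%N,0%N) lab p)));
  last by move=> p _; rewrite mxE Am_diag.
rewrite -(big_mkord xpredT (fun p => (fun ij : nat * nat => (NN (off y ij.1)).[kap y ij.1]) (nth (0%N,0%N) lab p))).
rewrite (_ : \prod_(0 <= p < n) _ = \prod_(ij <- lab) (NN (off y ij.1)).[kap y ij.1]); last first.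
  by rewrite (big_nth (0%N,0%N)) lab_size.
rewrite /col_labels big_allpairs_dep /=.
have -> : iota 0 s = index_iota 0 s by rewrite /index_iota subn0.
rewrite big_mkord.
apply: eq_bigr => i _.
rewrite -{1}(subn0 (m i)) -/(index_iota 0 (m i)) prodr_const_nat subn0; congr (_ ^+ _).
rewrite /NN horner_prod.
rewrite (eq_bigr (fun l => (fun z => kap y i - z) (zz y l))); last by move=> l _; rewrite hornerXsubC.
by rewrite (off_prod (fun z => kap y i - z) (ltnW (ltn_ord i))).
Qed.

End D.


Section F.
Variable R : realType.
Variable n : nat.
Variable y : 'I_n -> R.

Local Notation s := (nvals y).
Local Notation m := (mult y).
Local Notation lab := (col_labels y).

Definition Pd : R := \prod_(i < nvals y) \prod_(j < nvals y | (i < j)%N)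
         (kap y j - kap y i) ^+ (mult y i * mult y j).

Lemma det_W_Pd : \det (W y) = Pd.
Proof.
rewrite (det_W_prod y) /Pd.
rewrite [RHS](eq_bigr (fun i : 'I_s => \prod_(j < s) (if (i < j)%N then (kap y j - kap y i) ^+ (m i * m j) else 1)));
  last by move=> i _; rewrite big_mkcond.
rewrite exchange_big /=; apply: eq_bigr => j _.
rewrite -prodrXl (big_ord_widen_cond s xpredT (fun i => (kap y j - kap y i) ^+ m i ^+ m j) (ltnW (ltn_ord j))).
rewrite big_mkcond /=; apply: eq_bigr => i _.
by case: ifP => // _; rewrite exprM.
Qed.

Lemma Pd_neq0 : Pd != 0.
Proof.
apply/prodf_neq0 => i _; apply/prodf_neq0 => j hij.
rewrite expf_neq0 // subr_eq0 /kap.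
rewrite nth_uniq ?ltn_ord //; last exact: dv_uniq.
by apply/negP => /eqP hji; move: hij; rewrite -hji ltnn.
Qed.

End F.


Section G.
Variable R : realType.
Variable n' : nat.
Variable y : 'I_n'.+1 -> R.

Local Notation n := n'.+1.
Local Notation s := (nvals y).
Local Notation m := (mult y).
Local Notation lab := (col_labels y).
Local Notation dv := (distinct_vals y).
Local Notation ys := [seq y i | i <- enum 'I_n].
Local Notation T := (Trip ys).

Definition key (x : R * R * nat) : nat * nat := (index x.1.2 dv, x.2).

Lemma size_ys : size ys = n.
Proof. by rewrite size_map size_enum_ord. Qed.

Lemma keyP x : x \in T -> key x \in lab /\ kap y (key x).1 = x.1.2.
Proof.
move=> xT; have h := Trip_inv xT.
have xin : x.1.2 \in ys by rewrite -has_pred1 has_count (leq_ltn_trans (leq0n _) h).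
have xdv : x.1.2 \in dv by rewrite dv_mem.
have kx : kap y (index x.1.2 dv) = x.1.2 by rewrite /kap nth_index.
split => //.
by rewrite lab_mem index_mem xdv /= mult_count kx.
Qed.

Definition vv : 'cV[R]_n :=
  \col_(col < n) \sum_(x <- T | key x == nth (0%N, 0%N) lab col) x.1.1.

Lemma sum_key (h : nat * nat -> R) :
  \sum_(x <- T) x.1.1 * h (key x) = \sum_(col < n) vv col 0 * h (nth (0%N, 0%N) lab col).
Proof.
rewrite [RHS](eq_bigr (fun col : 'I_n => \sum_(x <- T) (if key x == nth (0%N, 0%N) lab col then x.1.1 * h (key x) else 0))); last first.
  move=> col _; rewrite mxE big_distrl /= big_mkcond /=; apply: eq_bigr => x _.
  by case: eqP => [->|_]; rewrite ?mul0r.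
rewrite exchange_big /= big_seq [RHS]big_seq; apply: eq_bigr => x xT.
have [kin _] := keyP xT.
have hidx : (index (key x) lab < n)%N.
  have : (index (key x) lab < size lab)%N by rewrite index_mem.
  by rewrite lab_size.
rewrite -big_mkcond /= (big_pred1 (Ordinal hidx)) // => col /=.
rewrite -{1}(nth_index (0%N, 0%N) kin) nth_uniq ?lab_size //; last exact: lab_uniq.
by rewrite eq_sym.
Qed.

Definition ee : 'cV[R]_n := \col_(k < n) ((k : nat) == n')%:R.

Lemma E_T (t : R) : E T t = \sum_(col < n) vv col 0 *
   ebas (kap y (nth (0%N, 0%N) lab col).1) (nth (0%N, 0%N) lab col).2 t.
Proof.
rewrite -(sum_key (fun ij => ebas (kap y ij.1) ij.2 t)) /E big_seq [RHS]big_seq.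
by apply: eq_bigr => x xT; have [_ ->] := keyP xT.
Qed.

Lemma Wv : W y *m vv = ee.
Proof.
apply/matrixP => k z; rewrite ord1 !mxE.
have hk : (k < size ys)%N by rewrite size_ys.
have ne : ys != [::] by rewrite -size_eq0 size_ys.
rewrite [RHS](_ : _ = Ms k T); last by rewrite (Ms_Trip ne hk) size_ys.
have -> : Ms k T = \sum_(col < n) vv col 0 * mom k (kap y (nth (0%N, 0%N) lab col).1) (nth (0%N, 0%N) lab col).2.
  rewrite -(sum_key (fun ij => mom k (kap y ij.1) ij.2)) /Ms big_seq [RHS]big_seq.
  by apply: eq_bigr => x xT; have [_ ->] := keyP xT.
by apply: eq_bigr => col _; rewrite mxE mulrC.
Qed.

Lemma detMmat (t : R) : \det (Mmat y t) = \det (W y) * E T t.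
Proof.
rewrite (expand_det_row _ ord_max) E_T big_distrr /=; apply: eq_bigr => col _.
have cofE : cofactor (Mmat y t) ord_max col = cofactor (W y) ord_max col.
  rewrite /cofactor; congr (_ * _); congr (\det _); apply/matrixP => a b; rewrite !mxE /=.
  have ba : bump n' a = a by rewrite /bump leqNgt (ltn_ord a) add0n.
  rewrite ba (ltn_ord a) /mom.
  by case: leqP => // h; rewrite bin_small // mul0r.
have adjE : cofactor (W y) ord_max col = \det (W y) * vv col 0.
  have HA : \det (W y) *: vv = \adj (W y) *m ee.
    by rewrite -Wv mulmxA mul_adj_mx mul_scalar_mx.
  have := congr1 (fun M : 'cV[R]_n => M col 0) HA; rewrite !mxE => ->.
  rewrite (bigD1 ord_max) //= !mxE eqxx mulr1 big1 ?addr0 // => k hk.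
  by rewrite !mxE (_ : (k == n' :> nat) = false) ?mulr0 //; apply/negbTE: hk.
rewrite cofE adjE mxE /= ltnn /ebas; ring.
Qed.

End G.


Unset Implicit Arguments. Set Strict Implicit.

Theorem mainTheorem10 (R : realType) (n : nat) (y : 'I_n -> R) (gamma : R) :
  (0 < n)%N -> 0 <= gamma -> gamma < 1 ->
  simplex_int n.-1 (1 - gamma)
      (fun x => expR (\sum_(i < n) y i * nth 0 x i))
    = \det (Mmat y (1 - gamma)) /
      \prod_(i < nvals y) \prod_(j < nvals y | (i < j)%N)
         (kap y j - kap y i) ^+ (mult y i * mult y j)
  /\ (forall (c1 c2 : R) (r col : 'I_n), (r < n.-1)%N ->
        Mmat y c1 r col = Mmat y c2 r col).
Proof.
move=> n0 g0 g1; split; last first.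
  by move=> c1 c2 r col hr; rewrite !mxE /= hr.
case: n y n0 => [//|n'] y _.
have t0 : 0 <= 1 - gamma by rewrite subr_ge0 ltW.
set t := 1 - gamma.
rewrite -/(Pd y) -det_W_Pd (detMmat y t).
have Gf : (fun x => expR (\sum_(i < n'.+1) y i * nth 0 x i)) = G [seq y i | i <- enum 'I_n'.+1] 0.
  apply/funext => x; rewrite /G add0r; congr expR.
  rewrite -(big_mkord xpredT (fun i => [seq y i | i <- enum 'I_n'.+1]`_i * x`_i)) size_ys big_mkord.
  apply: eq_bigr => i _.
  by rewrite (nth_map i) ?size_enum_ord ?ltn_ord // nth_ord_enum.
rewrite Gf (simplex_G 0 (size_ys y) t0) expR0 mul1r.
have hW : \det (W y) != 0 by rewrite det_W_Pd Pd_neq0.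
by rewrite mulrC mulKf.
Qed.
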